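(* Let $X$ be a Banach space, $k\in\mathbb{N}$, and let $(e_n)_n\in\mathcal{SM}_k(X)$ be a Schauder basic sequence; let $E$ be the Banach space with Schauder basis $(e_n)_n$. Let $d\in\mathbb{N}$ and let $(\widetilde e_n)_n$ be a plegma block generated $d$-spreading model of $E$. Then $(\widetilde e_n)_n\in\mathcal{SM}_{k+d}(X)$.
   Context: $[M]^k$: $k$-subsets of $M\subseteq\mathbb{N}$ (increasing enumerations, $M(l)$ the $l$-th element of $M$). A $k$-sequence in $X$ is a map $[\mathbb{N}]^k\to X$, $s\mapsto x_s$. Plegma family: $(s_j)_{j=1}^l$ in $[M]^k$ with $s_1(i)<\dots<s_l(i)$ for all $i\le k$ and $s_l(i)<s_1(i+1)$ for $i<k$; a plegma pair is a plegma family of length 2. $(x_s)_{s\in[M]^k}$ generates the Hamel basis $(e_n)$ of a seminormed space $(E,\|\cdot\|_* )$ as a $k$-spreading model if for some null sequence $\delta_l>0$: $|\|\sum_{j=1}^m a_jx_{s_j}\|-\|\sum_{j=1}^m a_je_j\|_*|\le\delta_l$ for all $m\le l$, plegma $(s_j)_{j=1}^m$ in $[M]^k$ with $s_1(1)\ge M(l)$, $a_j\in[-1,1]$. $\mathcal{SM}_k(X)$ is the set of all sequences generated in this way by some $k$-sequence in $X$ and some infinite $M$. For a Banach space $Y$ with a Schauder basis, a $d$-sequence $(y_t)_{t\in[\mathbb{N}]^d}$ is plegma block if the $y_t$ are finitely supported and $\mathrm{supp}(y_{t_1})<\mathrm{supp}(y_{t_2})$ (i.e. $\max<\min$) for every plegma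 pair $(t_1,t_2)$ in $[\mathbb{N}]^d$; a $d$-spreading model of $Y$ is plegma block generated if it is generated by some plegma block $d$-sequence. *)

(* Defs.v *)
From Stdlib Require Import Reals Lra List.
Import ListNotations.
Open Scope R_scope.

Record BanachSpace := {
  carrier :> Type;
  vzero : carrier;
  vadd : carrier -> carrier -> carrier;
  vscal : R -> carrier -> carrier;
  vnorm : carrier -> R;
  vadd_assoc : forall x y z, vadd x (vadd y z) = vadd (vadd x y) z;
  vadd_comm : forall x y, vadd x y = vadd y x;
  vadd_zero : forall x, vadd x vzero = x;
  vadd_opp : forall x, vadd x (vscal (-1) x) = vzero;
  vscal_one : forall x, vscal 1 x = x;
  vscal_assoc : forall a b x, vscal a (vscal b x) = vscal (a * b) x;
  vscal_distr_v : forall a x y, vscal a (vadd x y) = vadd (vscal a x) (vscal a y);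
  vscal_distr_s : forall a b x, vscal (a + b) x = vadd (vscal a x) (vscal b x);
  vnorm_nonneg : forall x, 0 <= vnorm x;
  vnorm_def : forall x, vnorm x = 0 -> x = vzero;
  vnorm_scal : forall a x, vnorm (vscal a x) = Rabs a * vnorm x;
  vnorm_triangle : forall x y, vnorm (vadd x y) <= vnorm x + vnorm y;
  complete : forall u : nat -> carrier,
    (forall eps, 0 < eps -> exists n0, forall n m, (n0 <= n)%nat -> (n0 <= m)%nat ->
        vnorm (vadd (u n) (vscal (-1) (u m))) < eps) ->
    exists x, forall eps, 0 < eps -> exists n0, forall n, (n0 <= n)%nat ->
        vnorm (vadd (u n) (vscal (-1) x)) < eps
}.

Fixpoint lincomb (X : BanachSpace) (m : nat) (a : nat -> R) (v : nat -> X) : X :=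
  match m with
  | O => vzero X
  | S m' => vadd X (lincomb X m' a v) (vscal X (a m') (v m'))
  end.

(* A vector sum_n f n e_n of the span of (e_n) is encoded by its finitely supported
   coefficient sequence f; a seminorm ||.||_* on the space with Hamel basis (e_n)
   is encoded as a function N on such sequences. *)
Definition finsupp (f : nat -> R) : Prop :=
  exists n0, forall n, (n0 <= n)%nat -> f n = 0.

Definition is_seminorm (N : (nat -> R) -> R) : Prop :=
  (forall f g, finsupp f -> finsupp g -> N (fun n => f n + g n) <= N f + N g) /\
  (forall c f, finsupp f -> N (fun n => c * f n) = Rabs c * N f).

Definition unitv (n : nat) : nat -> R := fun i => if Nat.eqb i n then 1 else 0.

Definition trunc (m : nat) (a : nat -> R) : nat -> R :=
  fun i => if Nat.ltb i m then a i else 0.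

Fixpoint lincombf (m : nat) (a : nat -> R) (v : nat -> (nat -> R)) : nat -> R :=
  match m with
  | O => fun _ => 0
  | S m' => fun i => lincombf m' a v i + a m' * v m' i
  end.

(* (e_n) is a Schauder basic sequence w.r.t. the seminorm N (Grunblum criterion) *)
Definition schauder_basic (N : (nat -> R) -> R) : Prop :=
  (forall n, 0 < N (unitv n)) /\
  exists K, forall (a : nat -> R) (m n : nat), (m <= n)%nat ->
    N (trunc m a) <= K * N (trunc n a).

(* An infinite M subset of nat is given by its strictly increasing enumeration
   M : nat -> nat; the paper's M(l) (l >= 1) is M (l-1). *)
Definition strictly_increasing (M : nat -> nat) : Prop :=
  forall i j, (i < j)%nat -> (M i < M j)%nat.

(* a k-subset s of nat, as its increasing enumeration; s(i) (paper, i>=1) = nth (i-1) s 0 *)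
Definition kset_in (M : nat -> nat) (k : nat) (s : list nat) : Prop :=
  length s = k /\
  (forall i, (S i < k)%nat -> (nth i s 0 < nth (S i) s 0%nat)%nat) /\
  (forall i, (i < k)%nat -> exists l, nth i s 0%nat = M l).

Definition plegma (M : nat -> nat) (k m : nat) (s : nat -> list nat) : Prop :=
  (forall j, (j < m)%nat -> kset_in M k (s j)) /\
  (forall i j, (i < k)%nat -> (S j < m)%nat -> (nth i (s j) 0 < nth i (s (S j)) 0%nat)%nat) /\
  ((0 < m)%nat -> forall i, (S i < k)%nat ->
      (nth i (s (pred m)) 0 < nth (S i) (s 0%nat) 0%nat)%nat).

(* F m a s stands for || sum_{j<m} a_j x_{s_j} ||. *)
Definition generates_SM (k : nat) (M : nat -> nat)
  (F : nat -> (nat -> R) -> (nat -> list nat) -> R) (N : (nat -> R) -> R) : Prop :=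
  exists delta : nat -> R,
    (forall l, 0 < delta l) /\ Un_cv delta 0 /\
    forall (l m : nat) (s : nat -> list nat) (a : nat -> R),
      (1 <= l)%nat -> (m <= l)%nat -> plegma M k m s ->
      (M (pred l) <= nth 0 (s 0%nat) 0%nat)%nat ->
      (forall j, (j < m)%nat -> -1 <= a j <= 1) ->
      Rabs (F m a s - N (trunc m a)) <= delta l.

Definition in_SM (k : nat) (X : BanachSpace) (N : (nat -> R) -> R) : Prop :=
  is_seminorm N /\
  exists (x : list nat -> X) (M : nat -> nat),
    strictly_increasing M /\
    generates_SM k M (fun m a s => vnorm X (lincomb X m a (fun j => x (s j)))) N.

(* plegma block d-sequence in E (E = completion of the span of (e_n) under N);
   finitely supported vectors of E are exactly the finitely supported
   coefficient sequences. *)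
Definition plegma_block (d : nat) (y : list nat -> (nat -> R)) : Prop :=
  (forall t, kset_in (fun n => n) d t -> finsupp (y t)) /\
  (forall t1 t2, plegma (fun n => n) d 2 (fun j => if Nat.eqb j 0 then t1 else t2) ->
     forall n1 n2, y t1 n1 <> 0 -> y t2 n2 <> 0 -> (n1 < n2)%nat).

Definition plegma_block_generated_SM (d : nat) (N Nt : (nat -> R) -> R) : Prop :=
  is_seminorm Nt /\
  exists (y : list nat -> (nat -> R)) (M : nat -> nat),
    plegma_block d y /\ strictly_increasing M /\
    generates_SM d M (fun m a t => N (lincombf m a (fun j => y (t j)))) Nt.

(* Main.v *)
Require Import Defs.
From Stdlib Require Import Reals List Lra Lia.
From Stdlib Require Import FunctionalExtensionality IndefiniteDescription Classical.
Import ListNotations.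
Open Scope R_scope.

Fixpoint gsum (X : BanachSpace) (m : nat) (f : nat -> X) : X :=
  match m with O => vzero X | S m' => vadd X (gsum X m' f) (f m') end.

Lemma lincomb_gsum X m a v : lincomb X m a v = gsum X m (fun j => vscal X (a j) (v j)).
Proof. induction m; simpl; congruence. Qed.

Lemma vscal_0 X x : vscal X 0 x = vzero X.
Proof. apply vnorm_def. rewrite vnorm_scal, Rabs_R0. ring. Qed.
Lemma vnorm_zero X : vnorm X (vzero X) = 0.
Proof. rewrite <- (vscal_0 X (vzero X)), vnorm_scal, Rabs_R0. ring. Qed.
Lemma vscal_zero X c : vscal X c (vzero X) = vzero X.
Proof. apply vnorm_def. rewrite vnorm_scal, vnorm_zero. ring. Qed.
Lemma vzero_add X x : vadd X (vzero X) x = x.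
Proof. rewrite vadd_comm. apply vadd_zero. Qed.
Lemma vadd_swap X a b c e : vadd X (vadd X a b) (vadd X c e) = vadd X (vadd X a c) (vadd X b e).
Proof.
  rewrite <- !vadd_assoc. f_equal. rewrite !vadd_assoc. f_equal. apply vadd_comm. Qed.

Lemma gsum_add X m f g : gsum X m (fun n => vadd X (f n) (g n)) = vadd X (gsum X m f) (gsum X m g).
Proof. induction m; simpl. - symmetry; apply vadd_zero. - rewrite IHm. apply vadd_swap. Qed.
Lemma gsum_scal X m c f : vscal X c (gsum X m f) = gsum X m (fun n => vscal X c (f n)).
Proof. induction m; simpl. - apply vscal_zero. - rewrite vscal_distr_v, IHm. reflexivity. Qed.
Lemma gsum_zero X m f : (forall j, (j < m)%nat -> f j = vzero X) -> gsum X m f = vzero X.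
Proof. induction m; intros H; simpl; auto. rewrite IHm by (intros; apply H; lia). rewrite H by lia. apply vadd_zero. Qed.
Lemma gsum_ext X m f g : (forall j, (j < m)%nat -> f j = g j) -> gsum X m f = gsum X m g.
Proof. induction m; intros H; simpl; auto. rewrite IHm by (intros; apply H; lia). rewrite H by lia. reflexivity. Qed.
Lemma gsum_single X m f j0 : (j0 < m)%nat -> (forall j, (j < m)%nat -> j <> j0 -> f j = vzero X) -> gsum X m f = f j0.
Proof.
  induction m; intros Hj H; [lia|]. simpl.
  destruct (Nat.eq_dec j0 m) as [->|Hne].
  - rewrite gsum_zero by (intros; apply H; lia). apply vzero_add.
  - rewrite IHm by (try lia; intros; apply H; lia). rewrite (H m) by lia. apply vadd_zero.
Qed.
Lemma gsum_trunc X p f : (forall n, (p <= n)%nat -> f n = vzero X) -> forall q, (p <= q)%nat -> gsum X q f = gsum X p f.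
Proof. intros H q Hq. induction Hq; simpl; auto. rewrite IHHq, H by lia. apply vadd_zero. Qed.
Lemma gsum_exchange X m T h : gsum X m (fun j => gsum X T (h j)) = gsum X T (fun n => gsum X m (fun j => h j n)).
Proof. induction m; simpl. - symmetry. apply gsum_zero. auto. - rewrite IHm, <- gsum_add. reflexivity. Qed.

Lemma lincombf_single m a v i j0 : (j0 < m)%nat -> (forall j, (j<m)%nat -> j <> j0 -> v j i = 0) -> lincombf m a v i = a j0 * v j0 i.
Proof.
  induction m; intros Hj H; [lia|]. simpl.
  destruct (Nat.eq_dec j0 m) as [->|Hne].
  - assert (lincombf m a v i = 0).
    { clear IHm Hj. induction m; simpl; auto. rewrite IHm by (intros; apply H; lia). rewrite (H m) by lia. ring. }
    rewrite H0; ring.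
  - rewrite IHm by (try lia; intros; apply H; lia). rewrite (H m) by lia. ring.
Qed.
Lemma lincombf_zero m a v i : (forall j, (j<m)%nat -> v j i = 0) -> lincombf m a v i = 0.
Proof. induction m; intros H; simpl; auto. rewrite IHm by (intros; apply H; lia). rewrite (H m) by lia. ring. Qed.

Lemma nth_map_seq (f : nat -> nat) n i : (i < n)%nat -> nth i (map f (seq 0 n)) 0%nat = f i.
Proof. intros H. rewrite nth_indep with (d' := f 0%nat) by (rewrite length_map, length_seq; lia).
  rewrite map_nth, seq_nth by lia. reflexivity. Qed.

Lemma pl_kset K m u j : plegma (fun n=>n) K m u -> (j<m)%nat -> kset_in (fun n=>n) K (u j).
Proof. intros [H _] Hj. auto. Qed.
Lemma pl_incr K m u j i i' : plegma (fun n=>n) K m u -> (j<m)%nat -> (i < i')%nat -> (i' < K)%nat -> (nth i (u j) 0 < nth i' (u j) 0)%nat.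
Proof.
  intros Hp Hj. destruct (pl_kset K m u j Hp Hj) as [_ [Hinc _]].
  induction i'; intros Hi Hi'; [lia|].
  destruct (Nat.eq_dec i i') as [->|Hne]. - apply Hinc; lia.
  - specialize (IHi' ltac:(lia) ltac:(lia)). specialize (Hinc i' ltac:(lia)). lia.
Qed.
Lemma pl_incr_le K m u j i i' : plegma (fun n=>n) K m u -> (j<m)%nat -> (i <= i')%nat -> (i' < K)%nat -> (nth i (u j) 0 <= nth i' (u j) 0)%nat.
Proof. intros. destruct (Nat.eq_dec i i') as [->|]; [lia|]. pose proof (pl_incr K m u j i i' H H0 ltac:(lia) H2); lia. Qed.
Lemma pl_coord K m u i j j' : plegma (fun n=>n) K m u -> (i<K)%nat -> (j < j')%nat -> (j' < m)%nat -> (nth i (u j) 0 < nth i (u j') 0)%nat.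
Proof.
  intros [_ [Hc _]] Hi. induction j'; intros Hj Hj'; [lia|].
  destruct (Nat.eq_dec j j') as [->|Hne]. - apply Hc; lia.
  - specialize (IHj' ltac:(lia) ltac:(lia)). specialize (Hc i j' Hi Hj'). lia.
Qed.
Lemma pl_coord_le K m u i j j' : plegma (fun n=>n) K m u -> (i<K)%nat -> (j <= j')%nat -> (j' < m)%nat -> (nth i (u j) 0 <= nth i (u j') 0)%nat.
Proof. intros. destruct (Nat.eq_dec j j') as [->|]; [lia|]. pose proof (pl_coord K m u i j j' H H0 ltac:(lia) H2); lia. Qed.
Lemma pl_cross K m u i j j' : plegma (fun n=>n) K m u -> (S i < K)%nat -> (j<m)%nat -> (j'<m)%nat -> (nth i (u j) 0 < nth (S i) (u j') 0)%nat.
Proof.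
  intros Hp Hi Hj Hj'. pose proof Hp as [_ [_ Hx]]. specialize (Hx ltac:(lia) i Hi).
  pose proof (pl_coord_le K m u i j (pred m) Hp ltac:(lia) ltac:(lia) ltac:(lia)).
  pose proof (pl_coord_le K m u (S i) 0 j' Hp ltac:(lia) ltac:(lia) ltac:(lia)). lia.
Qed.

Lemma sinc_le (M : nat -> nat) : strictly_increasing M -> forall i j, (i <= j)%nat -> (M i <= M j)%nat.
Proof. intros H i j Hij. destruct (Nat.eq_dec i j) as [->|]; [lia|]. specialize (H i j ltac:(lia)). lia. Qed.

Lemma fin_max (R0 : nat -> nat -> Prop) : (forall x b b', R0 x b -> (b <= b')%nat -> R0 x b') -> (forall x, exists b, R0 x b) -> forall a, exists b, forall x, (x < a)%nat -> R0 x b.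
Proof. intros Hm H a. induction a. - exists 0%nat; intros; lia. - destruct IHa as [b Hb]. destruct (H a) as [b' Hb']. exists (Nat.max b b'). intros x Hx. destruct (Nat.eq_dec x a) as [->|]. + apply Hm with b'; auto; lia. + apply Hm with b; [apply Hb; lia| lia]. Qed.

Lemma unif_bound (d : nat) : forall (Q : list nat -> Prop) (P : list nat -> nat -> Prop), (forall r b b', P r b -> (b <= b')%nat -> P r b') -> (forall r, Q r -> exists b, P r b) -> forall a, exists b, forall r, length r = d -> Forall (fun x => (x < a)%nat) r -> Q r -> P r b.
Proof.
  induction d; intros Q P Hm H a.
  - destruct (classic (Q [])) as [HQ|HQ].
    + destruct (H _ HQ) as [b Hb]. exists b. intros r Hr _ Hq. destruct r; [auto|discriminate].
    + exists 0%nat. intros r Hr _ Hq. destruct r; [contradiction|discriminate].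
  - assert (Hx : forall x, exists b, forall r, length r = d -> Forall (fun z => (z<a)%nat) r -> Q (x::r) -> P (x::r) b).
    { intros x. apply (IHd (fun r => Q (x::r)) (fun r b => P (x::r) b)); auto. intros r b b' Hb Hle; eapply Hm; eauto. }
    destruct (fin_max (fun x b => forall r, length r = d -> Forall (fun z => (z<a)%nat) r -> Q (x::r) -> P (x::r) b)) with (a := a) as [b Hb].
    + intros x b b' Hb Hle r H1 H2 H3. eapply Hm; eauto.
    + exact Hx.
    + exists b. intros r Hr HF Hq. destruct r as [|x r]; [discriminate|]. apply Forall_cons_iff in HF as [H1 H2]. apply Hb; auto.
Qed.

Lemma finsupp_abs_bound f : finsupp f -> exists b:nat, forall n, Rabs (f n) <= INR b.
Proof.
  intros [n0 Hn0].
  destruct (fin_max (fun n b => Rabs (f n) <= INR b)) with (a := n0) as [b Hb].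
  - intros x b b' H Hle. apply le_INR in Hle. lra.
  - intros x. destruct (INR_unbounded (Rabs (f x))) as [b Hb]. exists b. lra.
  - exists b. intros n. destruct (Nat.lt_ge_cases n n0). + auto.
    + rewrite Hn0 by auto. rewrite Rabs_R0. apply pos_INR.
Qed.

Fixpoint cum (f : nat -> nat) (a : nat) : nat := match a with O => f O | S a' => (cum f a' + f (S a'))%nat end.
Lemma cum_ge f a : (f a <= cum f a)%nat.
Proof. destruct a; simpl; lia. Qed.
Lemma cum_mono f a a' : (a <= a')%nat -> (cum f a <= cum f a')%nat.
Proof. intros H; induction H; simpl; lia. Qed.

Fixpoint Pc (g h : nat -> nat) (a : nat) : nat := match a with O => O | S a' => (Pc g h a' + g a' + h a')%nat end.
Definition Sf (g h : nat -> nat) (a : nat) : nat := (Pc g h a + h a)%nat.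
Lemma Sf_ge g h a : (h a <= Sf g h a)%nat.
Proof. unfold Sf; lia. Qed.
Lemma Sf_step g h a : (Sf g h a + g a <= Sf g h (S a))%nat.
Proof. unfold Sf; simpl; lia. Qed.
Lemma Sf_mono g h a a' : (a <= a')%nat -> (Sf g h a <= Sf g h a')%nat.
Proof. intros H; induction H; [lia|]. pose proof (Sf_step g h m); lia. Qed.
Lemma Sf_lt g h a a' n : (a < a')%nat -> (n < g a)%nat -> (Sf g h a + n < Sf g h a')%nat.
Proof. intros H Hn. pose proof (Sf_step g h a). pose proof (Sf_mono g h (S a) a' H). lia. Qed.

Definition hasnz (f : nat -> R) (n : nat) : bool := existsb (fun n' => if Req_EM_T (f n') 0 then false else true) (seq 0 (S n)).
Lemma hasnz_iff f n : hasnz f n = true <-> exists n', (n' <= n)%nat /\ f n' <> 0.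
Proof.
  unfold hasnz. rewrite existsb_exists. split.
  - intros [n' [Hin Hf]]. apply in_seq in Hin. exists n'. split; [lia|]. destruct (Req_EM_T (f n') 0); congruence.
  - intros [n' [Hle Hf]]. exists n'. split. apply in_seq; lia. destruct (Req_EM_T (f n') 0); congruence.
Qed.
Fixpoint maxj (m : nat) (g : nat -> nat) : nat := match m with O => O | S m' => Nat.max (maxj m' g) (g m') end.
Lemma maxj_ge m g j : (j < m)%nat -> (g j <= maxj m g)%nat.
Proof. induction m; simpl; intros; [lia|]. destruct (Nat.eq_dec j m) as [->|]; [lia|]. specialize (IHm ltac:(lia)); lia. Qed.
Lemma maxj_bound m g b : (forall j, (j<m)%nat -> (g j <= b)%nat) -> (maxj m g <= b)%nat.
Proof. induction m; simpl; intros H; [lia|]. specialize (IHm ltac:(intros; apply H; lia)). specialize (H m ltac:(lia)). lia. Qed.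
Lemma maxj_mono m g g' : (forall j, (j<m)%nat -> (g j <= g' j)%nat) -> (maxj m g <= maxj m g')%nat.
Proof. induction m; simpl; intros H; [lia|]. specialize (IHm ltac:(intros; apply H; lia)). specialize (H m ltac:(lia)). lia. Qed.

Definition Jf (m : nat) (yy : nat -> nat -> R) (n : nat) : nat := maxj m (fun j => if hasnz (yy j) n then j else 0%nat).
Lemma Jf_lt m yy n : (1 <= m)%nat -> (Jf m yy n < m)%nat.
Proof. intros H. unfold Jf. assert (maxj m (fun j => if hasnz (yy j) n then j else 0%nat) <= pred m)%nat; [|lia].
  apply maxj_bound. intros j Hj. destruct (hasnz (yy j) n); lia. Qed.
Lemma Jf_eq m yy n j : (forall j j' n n', (j < j')%nat -> (j' < m)%nat -> yy j n <> 0 -> yy j' n' <> 0 -> (n < n')%nat) ->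
  (j < m)%nat -> yy j n <> 0 -> Jf m yy n = j.
Proof.
  intros Hd Hj Hy. unfold Jf. apply Nat.le_antisymm.
  - apply maxj_bound. intros j' Hj'. destruct (hasnz (yy j') n) eqn:E; [|lia].
    apply hasnz_iff in E as [n' [Hle Hn']]. destruct (Nat.le_gt_cases j' j); [lia|].
    specialize (Hd j j' n n' ltac:(lia) Hj' Hy Hn'). lia.
  - assert (E : hasnz (yy j) n = true) by (apply hasnz_iff; exists n; auto).
    pose proof (maxj_ge m (fun j => if hasnz (yy j) n then j else 0%nat) j Hj). simpl in H. rewrite E in H. exact H.
Qed.
Lemma Jf_mono m yy n n' : (n <= n')%nat -> (Jf m yy n <= Jf m yy n')%nat.
Proof.
  intros H. unfold Jf. apply maxj_mono. intros j Hj. destruct (hasnz (yy j) n) eqn:E; [|lia].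
  assert (E' : hasnz (yy j) n' = true). { apply hasnz_iff in E as [n1 [H1 H2]]. apply hasnz_iff. exists n1; split; [lia|auto]. }
  rewrite E'; lia.
Qed.

Definition tlf (M2 : nat -> nat) (d : nat) (v : list nat) : list nat := map M2 (map (fun i => nth i v 0%nat) (seq 0 d)).
Lemma tlf_nth M2 d v i : (i < d)%nat -> nth i (tlf M2 d v) 0%nat = M2 (nth i v 0%nat).
Proof. intros H. unfold tlf. rewrite map_map. apply nth_map_seq with (f := fun i => M2 (nth i v 0%nat)); auto. Qed.
Lemma tlf_len M2 d v : length (tlf M2 d v) = d.
Proof. unfold tlf. rewrite !length_map, length_seq. auto. Qed.
Definition sigf (M : nat -> nat) (S0 : nat -> nat) (k d : nat) (v : list nat) (n : nat) : list nat :=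
  map (fun i => M (S0 (nth (d+i) v 0%nat) + n)%nat) (seq 0 k).
Lemma sigf_nth M S0 k d v n i : (i < k)%nat -> nth i (sigf M S0 k d v n) 0%nat = M (S0 (nth (d+i) v 0%nat) + n)%nat.
Proof. intros H. unfold sigf. apply nth_map_seq with (f := fun i => M (S0 (nth (d+i) v 0%nat) + n)%nat); auto. Qed.
Lemma sigf_len M S0 k d v n : length (sigf M S0 k d v n) = k.
Proof. unfold sigf. rewrite !length_map, length_seq. auto. Qed.

Lemma inv_cv : Un_cv (fun l => / INR (S l)) 0.
Proof.
  apply (cv_infty_cv_0 (fun l => INR (S l))). intros A. destruct (INR_unbounded A) as [n Hn].
  exists n. intros p Hp. apply Rlt_le_trans with (INR n); [lra|]. apply le_INR; lia.
Qed.

Theorem mainTheorem8 (X : BanachSpace) (k : nat) (hk : (1 <= k)%nat)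
  (N : (nat -> R) -> R) (hSM : in_SM k X N) (hbasic : schauder_basic N)
  (d : nat) (hd : (1 <= d)%nat) (Nt : (nat -> R) -> R)
  (hpb : plegma_block_generated_SM d N Nt) :
  in_SM (k + d) X Nt.
Proof.
  destruct hSM as [hN [x [M [hM [del [hdpos [hdcv hgen]]]]]]].
  destruct hpb as [hNt [y [M2 [[hyfs hyord] [hM2 [del2 [hd2pos [hd2cv hgen2]]]]]]]].
  assert (HB : forall a, exists b, forall r, length r = d -> Forall (fun z => (z<a)%nat) r ->
     kset_in (fun n=>n) d (map M2 r) -> forall n, y (map M2 r) n <> 0 -> (n < b)%nat).
  { intros a. apply (unif_bound d (fun r => kset_in (fun n=>n) d (map M2 r)) (fun r b => forall n, y (map M2 r) n <> 0 -> (n<b)%nat)).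
    - intros r b b' Hb Hle n Hn. specialize (Hb n Hn). lia.
    - intros r Hr. destruct (hyfs _ Hr) as [n0 Hn0]. exists n0. intros n Hn. destruct (Nat.lt_ge_cases n n0); auto. exfalso; apply Hn, Hn0; auto. }
  destruct (functional_choice _ HB) as [B0 HB0].
  assert (HC : forall a, exists b, forall r, length r = d -> Forall (fun z => (z<a)%nat) r ->
     kset_in (fun n=>n) d (map M2 r) -> forall n, Rabs (y (map M2 r) n) <= INR b).
  { intros a. apply (unif_bound d (fun r => kset_in (fun n=>n) d (map M2 r)) (fun r b => forall n, Rabs (y (map M2 r) n) <= INR b)).
    - intros r b b' Hb Hle n. specialize (Hb n). apply le_INR in Hle. lra.
    - intros r Hr. apply finsupp_abs_bound. apply hyfs, Hr. }
  destruct (functional_choice _ HC) as [C0 HC0].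
  set (Bm := cum B0).
  assert (HL : forall a, exists L, (1 <= L)%nat /\ (Bm a <= L)%nat /\ (INR (C0 a) + 1) * del L <= / INR (S a)).
  { intros a. assert (Hc : 0 < INR (C0 a) + 1) by (pose proof (pos_INR (C0 a)); lra).
    assert (Ha : 0 < INR (S a)) by (apply lt_0_INR; lia).
    destruct (hdcv (/ (INR (S a) * (INR (C0 a) + 1)))) as [N0 HN0].
    { apply Rinv_0_lt_compat. apply Rmult_lt_0_compat; auto. }
    exists (Nat.max N0 (Nat.max (Bm a) 1)). split; [lia|]. split; [lia|].
    specialize (HN0 (Nat.max N0 (Nat.max (Bm a) 1)) ltac:(lia)). unfold R_dist in HN0.
    rewrite Rminus_0_r, Rabs_pos_eq in HN0 by (apply Rlt_le, hdpos).
    apply Rmult_lt_compat_l with (r := INR (C0 a) + 1) in HN0; auto.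
    rewrite Rinv_mult in HN0. replace ((INR (C0 a) + 1) * (/ INR (S a) * / (INR (C0 a) + 1))) with (/ INR (S a)) in HN0 by (field; lra).
    lra. }
  destruct (functional_choice _ HL) as [Lf HLf].
  set (S0 := Sf Bm Lf).
  set (x' := fun u : list nat => gsum X (Bm (nth d u 0%nat))
       (fun n => vscal X (y (tlf M2 d u) n) (x (sigf M S0 k d u n)))).
  split; [exact hNt|].
  exists x', (fun n => n). split; [intros i j H; exact H|].
  exists (fun l => / INR (S l) + del2 l). split; [|split].
  { intros l. pose proof (hd2pos l). assert (0 < / INR (S l)) by (apply Rinv_0_lt_compat, lt_0_INR; lia). lra. }
  { replace 0 with (0 + 0) by ring. apply CV_plus; [apply inv_cv|exact hd2cv]. }
  intros l m u a Hl Hml Hpl Hstart Ha. cbv beta.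

  destruct (Nat.eq_dec m 0) as [->|Hm0].
  { cbn [lincomb]. rewrite vnorm_zero.
    assert (Nt (trunc 0 a) = 0).
    { replace (trunc 0 a) with (fun n : nat => 0 * (fun _ : nat => 0) n) by (apply functional_extensionality; intros n; unfold trunc; destruct (Nat.ltb n 0) eqn:E; [apply Nat.ltb_lt in E; lia|ring]).
      destruct hNt as [_ Hh]. rewrite Hh. rewrite Rabs_R0; ring. exists 0%nat; auto. }
    rewrite H, Rminus_0_r, Rabs_R0. pose proof (hd2pos l). assert (0 < / INR (S l)) by (apply Rinv_0_lt_compat, lt_0_INR; lia). lra. }
  cbv beta in Hstart.
  set (a0 := nth d (u 0%nat) 0%nat).
  set (T := Bm a0).
  assert (F1 : forall j i, (j < m)%nat -> (i < d)%nat -> (nth i (u j) 0 < a0)%nat).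
  { intros j i Hj Hi. pose proof (pl_cross (k+d) m u i j 0 Hpl ltac:(lia) Hj ltac:(lia)).
    pose proof (pl_incr_le (k+d) m u 0 (S i) d Hpl ltac:(lia) ltac:(lia) ltac:(lia)). unfold a0. lia. }
  assert (KS : forall j, (j < m)%nat -> kset_in (fun n => n) d (tlf M2 d (u j))).
  { intros j Hj. split; [apply tlf_len|split].
    - intros i Hi. rewrite !tlf_nth by lia. apply hM2. apply pl_incr with (K:=(k+d)%nat) (m:=m); auto; lia.
    - intros i Hi. exists (nth i (tlf M2 d (u j)) 0%nat). reflexivity. }
  assert (Hr : forall j, (j < m)%nat -> length (map (fun i => nth i (u j) 0%nat) (seq 0 d)) = d /\
     Forall (fun z => (z < a0)%nat) (map (fun i => nth i (u j) 0%nat) (seq 0 d))).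
  { intros j Hj. split. rewrite length_map, length_seq; auto.
    apply Forall_forall. intros z Hz. apply in_map_iff in Hz as [i [<- Hi]]. apply in_seq in Hi. apply F1; lia. }
  assert (F2supp : forall j n, (j < m)%nat -> y (tlf M2 d (u j)) n <> 0 -> (n < B0 a0)%nat).
  { intros j n Hj Hy. destruct (Hr j Hj) as [H1 H2]. exact (HB0 a0 _ H1 H2 (KS j Hj) n Hy). }
  assert (F2coef : forall j n, (j < m)%nat -> Rabs (y (tlf M2 d (u j)) n) <= INR (C0 a0)).
  { intros j n Hj. destruct (Hr j Hj) as [H1 H2]. exact (HC0 a0 _ H1 H2 (KS j Hj) n). }
  assert (HBT : (B0 a0 <= T)%nat) by apply cum_ge.
  assert (F3 : forall j i, (j < m)%nat -> (i < k)%nat -> (a0 <= nth (d+i) (u j) 0)%nat).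
  { intros j i Hj Hi. pose proof (pl_incr_le (k+d) m u 0 d (d+i) Hpl ltac:(lia) ltac:(lia) ltac:(lia)).
    pose proof (pl_coord_le (k+d) m u (d+i) 0 j Hpl ltac:(lia) ltac:(lia) Hj). unfold a0; lia. }
  assert (F3T : forall j i, (j < m)%nat -> (i < k)%nat -> (T <= Bm (nth (d+i) (u j) 0))%nat).
  { intros j i Hj Hi. apply cum_mono. auto. }
  assert (Hdisj : forall j j' n n', (j < j')%nat -> (j' < m)%nat -> y (tlf M2 d (u j)) n <> 0 -> y (tlf M2 d (u j')) n' <> 0 -> (n < n')%nat).
  { intros j j' n n' Hjj Hj' Hy Hy'.
    assert (HP : plegma (fun n => n) d 2 (fun q => if Nat.eqb q 0 then tlf M2 d (u j) else tlf M2 d (u j'))).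
    { split; [|split].
      - intros q Hq. destruct q as [|[|q]]; simpl; [apply KS; lia|apply KS; lia|lia].
      - intros i q Hi Hq. destruct q as [|q]; [|lia]. simpl. rewrite !tlf_nth by lia. apply hM2. apply pl_coord with (K:=(k+d)%nat) (m:=m); auto; lia.
      - intros _ i Hi. simpl. rewrite !tlf_nth by lia. apply hM2. apply pl_cross with (K:=(k+d)%nat) (m:=m); auto; lia. }
    exact (hyord _ _ HP n n' Hy Hy'). }
  set (J := Jf m (fun j => y (tlf M2 d (u j)))).
  assert (HJlt : forall n, (J n < m)%nat) by (intros; apply Jf_lt; lia).
  assert (HJeq : forall j n, (j < m)%nat -> y (tlf M2 d (u j)) n <> 0 -> J n = j).
  { intros j n Hj Hy. apply (Jf_eq m (fun j => y (tlf M2 d (u j)))); auto. }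
  assert (Hy0 : forall j n, (j < m)%nat -> j <> J n -> y (tlf M2 d (u j)) n = 0).
  { intros j n Hj Hne. destruct (Req_EM_T (y (tlf M2 d (u j)) n) 0) as [E|E]; auto. exfalso. apply Hne. symmetry. auto. }
  set (sg := fun n => sigf M S0 k d (u (J n)) n).
  set (c := INR (C0 a0) + 1).
  assert (Hc : 0 < c) by (unfold c; pose proof (pos_INR (C0 a0)); lra).
  set (w' := fun n => a (J n) * y (tlf M2 d (u (J n))) n / c).
  set (L := Lf a0).
  destruct (HLf a0) as [HL1 [HL2 HL3]]. fold L in HL1, HL2, HL3.
  assert (HV : lincomb X m a (fun j => x' (u j)) = vscal X c (lincomb X T w' (fun p => x (sg p)))).
  { rewrite !lincomb_gsum, gsum_scal.
    transitivity (gsum X m (fun j => gsum X T (fun n => vscal X (a j * y (tlf M2 d (u j)) n) (x (sigf M S0 k d (u j) n))))).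
    { apply gsum_ext. intros j Hj. unfold x'.
      assert (Hz : forall n, (T <= n)%nat -> vscal X (y (tlf M2 d (u j)) n) (x (sigf M S0 k d (u j) n)) = vzero X).
      { intros n Hn. assert (y (tlf M2 d (u j)) n = 0).
        { destruct (Req_EM_T (y (tlf M2 d (u j)) n) 0) as [E|E]; auto. specialize (F2supp j n Hj E). lia. }
        rewrite H. apply vscal_0. }
      rewrite (gsum_trunc X T _ Hz (Bm (nth d (u j) 0%nat))).
      - rewrite gsum_scal. apply gsum_ext. intros n _. rewrite vscal_assoc. reflexivity.
      - specialize (F3T j 0%nat Hj ltac:(lia)). rewrite Nat.add_0_r in F3T. exact F3T. }
    rewrite gsum_exchange. apply gsum_ext. intros n Hn.
    rewrite vscal_assoc.
    rewrite (gsum_single X m _ (J n) (HJlt n)).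
    - cbv beta. unfold sg. f_equal. unfold w'. field. lra.
    - intros j Hj Hne. rewrite (Hy0 j n Hj Hne), Rmult_0_r. apply vscal_0. }
  assert (HR : lincombf m a (fun j => y (tlf M2 d (u j))) = fun i => c * trunc T w' i).
  { apply functional_extensionality. intros i. unfold trunc. destruct (Nat.ltb i T) eqn:E.
    - rewrite (lincombf_single m a _ i (J i) (HJlt i)). unfold w'. field. lra.
      intros j Hj Hne. apply Hy0; auto.
    - apply Nat.ltb_ge in E. rewrite lincombf_zero. ring. intros j Hj.
      destruct (Req_EM_T (y (tlf M2 d (u j)) i) 0) as [E'|E']; auto. specialize (F2supp j i Hj E'). lia. }
  assert (HNc : N (fun i => c * trunc T w' i) = c * N (trunc T w')).
  { destruct hN as [_ Hh]. rewrite Hh. rewrite Rabs_pos_eq by lra. reflexivity.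
    exists T. intros n Hn. unfold trunc. destruct (Nat.ltb n T) eqn:E; auto. apply Nat.ltb_lt in E. lia. }
  assert (HPs : plegma M k T sg).
  { split; [|split].
    - intros n Hn. split; [apply sigf_len|split].
      + intros i Hi. unfold sg. rewrite !sigf_nth by lia. apply hM.
        pose proof (pl_incr (k+d) m u (J n) (d+i) (d + S i) Hpl (HJlt n) ltac:(lia) ltac:(lia)).
        pose proof (F3T (J n) i (HJlt n) ltac:(lia)).
        pose proof (Sf_lt Bm Lf (nth (d+i) (u (J n)) 0%nat) (nth (d+S i) (u (J n)) 0%nat) n H ltac:(lia)).
        unfold S0. lia.
      + intros i Hi. exists (S0 (nth (d+i) (u (J n)) 0%nat) + n)%nat. unfold sg. apply sigf_nth; lia.
    - intros i n Hi Hn. unfold sg. rewrite !sigf_nth by lia. apply hM.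
      pose proof (Jf_mono m (fun j => y (tlf M2 d (u j))) n (S n) ltac:(lia)). fold J in H.
      destruct (Nat.eq_dec (J n) (J (S n))) as [E|E].
      + rewrite E. lia.
      + pose proof (pl_coord (k+d) m u (d+i) (J n) (J (S n)) Hpl ltac:(lia) ltac:(lia) (HJlt (S n))).
        pose proof (F3T (J n) i (HJlt n) ltac:(lia)).
        pose proof (Sf_lt Bm Lf (nth (d+i) (u (J n)) 0%nat) (nth (d+i) (u (J (S n))) 0%nat) n H0 ltac:(lia)).
        unfold S0. lia.
    - intros HT i Hi. unfold sg. rewrite !sigf_nth by lia. apply hM.
      pose proof (pl_cross (k+d) m u (d+i) (J (pred T)) (J 0%nat) Hpl ltac:(lia) (HJlt _) (HJlt _)).
      rewrite <- Nat.add_succ_r in H.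
      pose proof (F3T (J (pred T)) i (HJlt _) ltac:(lia)).
      pose proof (Sf_lt Bm Lf _ _ (pred T) H ltac:(lia)). unfold S0. lia. }
  assert (HSs : (M (pred L) <= nth 0 (sg 0%nat) 0)%nat).
  { unfold sg. rewrite sigf_nth by lia. apply sinc_le; auto.
    pose proof (Sf_ge Bm Lf a0). pose proof (Sf_mono Bm Lf a0 _ (F3 (J 0%nat) 0%nat (HJlt _) ltac:(lia))).
    unfold S0, L in *. lia. }
  assert (Hw : forall p, (p < T)%nat -> -1 <= w' p <= 1).
  { intros p Hp. unfold w'.
    pose proof (F2coef (J p) p (HJlt p)). pose proof (Ha (J p) (HJlt p)).
    assert (Rabs (a (J p) * y (tlf M2 d (u (J p))) p) <= INR (C0 a0)).
    { rewrite Rabs_mult. apply Rle_trans with (1 * INR (C0 a0)); [|lra].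
      apply Rmult_le_compat; try apply Rabs_pos; auto. apply Rabs_le; lra. }
    set (q := a (J p) * y (tlf M2 d (u (J p))) p) in *.
    assert (-INR (C0 a0) <= q <= INR (C0 a0)).
    { unfold Rabs in H1. destruct (Rcase_abs q); lra. }
    unfold c in *.
    split; apply (Rmult_le_reg_r (INR (C0 a0) + 1)); auto; unfold Rdiv; rewrite Rmult_assoc, Rinv_l, Rmult_1_r; lra. }
  pose proof (hgen L T sg w' HL1 HL2 HPs HSs Hw) as HX. cbv beta in HX.
  assert (HPt : plegma M2 d m (fun j => tlf M2 d (u j))).
  { split; [|split].
    - intros j Hj. destruct (KS j Hj) as [K1 [K2 _]]. split; [exact K1|split; [exact K2|]].
      intros i Hi. exists (nth i (u j) 0%nat). apply tlf_nth; lia.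
    - intros i j Hi Hj. rewrite !tlf_nth by lia. apply hM2. apply pl_coord with (K:=(k+d)%nat) (m:=m); auto; lia.
    - intros _ i Hi. rewrite !tlf_nth by lia. apply hM2. apply pl_cross with (K:=(k+d)%nat) (m:=m); auto; lia. }
  assert (HSt : (M2 (pred l) <= nth 0 (tlf M2 d (u 0%nat)) 0)%nat).
  { rewrite tlf_nth by lia. apply sinc_le; auto. }
  pose proof (hgen2 l m (fun j => tlf M2 d (u j)) a Hl Hml HPt HSt Ha) as H2. cbv beta in H2.
  rewrite HR, HNc in H2.
  rewrite HV, vnorm_scal, (Rabs_pos_eq c) by lra.
  assert (Hal : (l <= a0)%nat).
  { pose proof (pl_incr (k+d) m u 0 0 d Hpl ltac:(lia) ltac:(lia) ltac:(lia)). unfold a0. lia. }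
  assert (Hinv : / INR (S a0) <= / INR (S l)).
  { apply Rinv_le_contravar. apply lt_0_INR; lia. apply le_INR; lia. }
  set (A := vnorm X (lincomb X T w' (fun j => x (sg j)))) in *.
  set (B := N (trunc T w')) in *.
  assert (Rabs (c * A - c * B) <= / INR (S l)).
  { replace (c * A - c * B) with (c * (A - B)) by ring. rewrite Rabs_mult, (Rabs_pos_eq c) by lra.
    apply Rle_trans with (c * del L); [apply Rmult_le_compat_l; lra|]. unfold c. lra. }
  pose proof (Rabs_triang (c * A - c * B) (c * B - Nt (trunc m a))).
  replace (c * A - c * B + (c * B - Nt (trunc m a))) with (c * A - Nt (trunc m a)) in H0 by ring.
  lra.
Qed.
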